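(* Let $(G_k)_{k\in\mathbb Z}$ be a gibonacci sequence and let $F_k$ denote the Fibonacci numbers. For every positive integer $n$ and all integers $m$, $s$ and $t$, \begin{equation*} 5\sum_{j = 1}^n (-F_{m - 5})^{n - j} F_m^{j - 1} G_{5(j + t) + m + s} = F_m^n G_{5(n + t + 1) + s} - (-1)^n F_{m - 5}^n G_{5(t + 1) + s}. \end{equation*}
   Context: A gibonacci sequence $(G_k)_{k\in\mathbb Z}$ is defined by arbitrary initial values $G_0=a$, $G_1=b$ (numbers, not both zero) and $G_k=G_{k-1}+G_{k-2}$ for all integers $k$. The Fibonacci numbers $F_k$ are the gibonacci sequence with $F_0=0$, $F_1=1$, extended to all integer indices by the same recurrence. The convention $0^0=1$ is used for powers. *)

(* Defs.v *)
From mathcomp Require Import all_boot all_order all_algebra.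
Set Implicit Arguments. Unset Strict Implicit. Unset Printing Implicit Defensive.
Import Order.TTheory GRing.Theory Num.Theory.
Local Open Scope ring_scope.

Fixpoint fibn (n : nat) : int :=
  match n with
  | 0 => 0
  | 1 => 1
  | (m.+1 as p).+1 => fibn p + fibn m
  end.

(* Extension to all integer indices by the same recurrence:
   F_{-n} = (-1)^(n+1) F_n. *)
Definition fib (k : int) : int :=
  match k with
  | Posz n => fibn n
  | Negz n => (-1) ^+ n * fibn n.+1  (* Negz n = -(n+1) *)
  end.

Definition gibonacci (R : nzRingType) (G : int -> R) : Prop :=
  (forall k : int, G k = G (k - 1) + G (k - 2)) /\ ~ (G 0 = 0 /\ G 1 = 0).

(* Main.v *)
Require Import Defs.
From mathcomp Require Import all_boot all_order all_algebra.
From mathcomp Require Import zify ring.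
Import Order.TTheory GRing.Theory Num.Theory.
Local Open Scope ring_scope.

Lemma fibnS n : fibn n.+2 = fibn n.+1 + fibn n. Proof. by []. Qed.

Lemma fib_rec2 (k : int) : fib (k + 2) = fib (k + 1) + fib k.
Proof.
case: k => [n|n].
  rewrite (_ : Posz n + 2 = Posz n.+2); last by lia.
  rewrite (_ : Posz n + 1 = Posz n.+1); last by lia.
  by [].
case: n => [|[|p]].
- by [].
- by [].
rewrite (_ : Negz p.+2 + 2 = Negz p); last by rewrite !NegzE; lia.
rewrite (_ : Negz p.+2 + 1 = Negz p.+1); last by rewrite !NegzE; lia.
change ((-1) ^+ p * fibn p.+1 = (-1) ^+ p.+1 * fibn p.+2 + (-1) ^+ p.+2 * fibn p.+3).
rewrite !exprS !fibnS.
ring.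
Qed.

Lemma fib_rec (k : int) : fib k = fib (k - 1) + fib (k - 2).
Proof.
have := fib_rec2 (k - 2).
rewrite subrK (_ : k - 2 + 1 = k - 1) //; ring.
Qed.

Lemma rec_zero (R : nzRingType) (H : int -> R)
  (hH : forall k, H k = H (k - 1) + H (k - 2)) :
  H 0 = 0 -> H 1 = 0 -> forall x, H x = 0.
Proof.
move=> h0 h1.
have fw : forall n : nat, H n = 0 /\ H n.+1 = 0.
  elim=> [|n [IH1 IH2]]; first by split.
  split => //. rewrite hH.
  rewrite (_ : Posz n.+2 - 1 = Posz n.+1); last by lia.
  rewrite (_ : Posz n.+2 - 2 = Posz n); last by lia.
  by rewrite IH1 IH2 addr0.
have bw : forall n : nat, H (- Posz n) = 0 /\ H (1 - Posz n) = 0.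
  elim=> [|n [IH1 IH2]]; first by rewrite oppr0 subr0.
  have := hH (1 - Posz n).
  rewrite (_ : 1 - Posz n - 1 = - Posz n); last by lia.
  rewrite (_ : 1 - Posz n - 2 = - Posz n.+1); last by lia.
  rewrite IH1 IH2 add0r => <-; split => //.
  by rewrite (_ : 1 - Posz n.+1 = - Posz n); last by lia.
case=> n; first by case: (fw n).
by rewrite NegzE; case: (bw n.+1).
Qed.

Lemma key (R : numFieldType) (G : int -> R)
  (hG : forall k, G k = G (k - 1) + G (k - 2)) (m k : int) :
  5 * G (k + m) = (fib m)%:~R * G (k + 5) + (fib (m - 5))%:~R * G k.
Proof.
have hG2 : forall x, G (x + 2) = G (x + 1) + G x.
  move=> x; rewrite hG; congr (G _ + G _); ring.
pose H x := 5 * G (k + x) - (fib x)%:~R * G (k + 5) - (fib (x - 5))%:~R * G k.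
suff: H m = 0 by rewrite /H => /eqP; rewrite subr_eq0 subr_eq => /eqP ->; ring.
apply: rec_zero.
- move=> x; rewrite /H.
  rewrite (hG (k + x)) (fib_rec x) (fib_rec (x - 5)) !intrD.
  rewrite (_ : k + x - 1 = k + (x - 1)); last by ring.
  rewrite (_ : k + x - 2 = k + (x - 2)); last by ring.
  rewrite (_ : x - 5 - 1 = x - 1 - 5); last by ring.
  rewrite (_ : x - 5 - 2 = x - 2 - 5); last by ring.
  ring.
- rewrite /H addr0 (_ : fib (0 - 5) = 5) //.
  rewrite (_ : fib 0 = 0) //. rewrite mul0r subr0. 
  ring.

- rewrite /H (_ : fib (1 - 5) = -3) // (_ : fib 1 = 1) //.
  have e3 := hG2 k. have e4 := hG2 (k+1). have e5 := hG2 (k + 2).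
  have e6 := hG2 (k + 3).
  rewrite (_ : k + 1 + 2 = k + 3) in e4; last by ring.
  rewrite (_ : k + 1 + 1 = k + 2) in e4; last by ring.
  rewrite (_ : k + 2 + 2 = k + 4) in e5; last by ring.
  rewrite (_ : k + 2 + 1 = k + 3) in e5; last by ring.
  rewrite (_ : k + 3 + 2 = k + 5) in e6; last by ring.
  rewrite (_ : k + 3 + 1 = k + 4) in e6; last by ring.
  rewrite e6 e5 e4 e3. rewrite !intrN. 
  ring.
Qed.

Theorem proposition3 (R : numFieldType) (G : int -> R) (hG : gibonacci G)
  (n : nat) (hn : (0 < n)%N) (m s t : int) :
  5 * \sum_(1 <= j < n.+1)
        (- (fib (m - 5))%:~R) ^+ (n - j) * (fib m)%:~R ^+ (j - 1)
        * G (5 * (j%:Z + t) + m + s)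
  = (fib m)%:~R ^+ n * G (5 * (n%:Z + t + 1) + s)
    - (-1) ^+ n * (fib (m - 5))%:~R ^+ n * G (5 * (t + 1) + s).
Proof.
case: hG => hG _.
set a : R := (fib m)%:~R; set b : R := (fib (m - 5))%:~R.
pose X (j : nat) := (- b) ^+ (n - j) * a ^+ j * G (5 * (j%:Z + t + 1) + s).
rewrite big_distrr /= big_add1 /=.
rewrite (telescope_sumr_eq X) //.
  rewrite /X subnn expr0 mul1r expr0 mulr1 add0r subn0.
  by rewrite [(- b) ^+ n]exprNn.
move=> k /andP [_ hk].
have hkey := @key _ G hG m (5 * (k.+1%:Z + t) + s).
rewrite /X (_ : (n - k = (n - k.+1).+1)%N); last by lia. rewrite exprS subn1 /=.
rewrite (_ : 5 * (k.+1%:Z + t) + m + s = 5 * (k.+1%:Z + t) + s + m); last by lia.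
rewrite (_ : 5 * (k.+1%:Z + t + 1) + s = 5 * (k.+1%:Z + t) + s + 5); last by lia.
rewrite (_ : 5 * (k%:Z + t + 1) + s = 5 * (k.+1%:Z + t) + s); last by lia.
move: hkey; set k' := 5 * (k.+1%:Z + t) + s => hkey.
rewrite -/a -/b exprS.
transitivity ((- b) ^+ (n - k.+1) * a ^+ k * (5 * G (k' + m))); first ring.
rewrite hkey -/a -/b; ring.
Qed.
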